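(* Let $K$ be a finitely generated ring and $I$ a two-sided ideal of $K$ such that the additive group of $K/I$ is finitely generated and $I$, regarded as a ring, is finitely separable. Then $K$ is finitely separable.
   Context: Rings are associative and not necessarily unital. A ring $R$ is finitely separable if for every $r\in R$ and every subring $A\subseteq R$ with $r\notin A$ there exist a finite ring $F$ and a homomorphism $\varphi:R\to F$ with $\varphi(r)\notin\varphi(A)$. *)

(* Defs.v *)
From HB Require Import structures.
From mathcomp Require Import all_boot all_algebra.
Set Implicit Arguments. Unset Strict Implicit. Unset Printing Implicit Defensive.
Import GRing.Theory.
Local Open Scope ring_scope.

HB.mixin Record isNURing V of GRing.Zmodule V := {
  nmul : V -> V -> V;
  nmulA : forall x y z, nmul x (nmul y z) = nmul (nmul x y) z;
  nmulDl : forall x y z, nmul (x + y) z = nmul x z + nmul y z;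
  nmulDr : forall x y z, nmul x (y + z) = nmul x y + nmul x z }.

#[short(type="nuRingType")]
HB.structure Definition NURing := {V of isNURing V & GRing.Zmodule V}.

Definition is_subring (R : nuRingType) (A : R -> Prop) : Prop :=
  [/\ A 0, (forall x y, A x -> A y -> A (x - y))
     & (forall x y, A x -> A y -> A (nmul x y))].

Definition is_ideal (R : nuRingType) (I : R -> Prop) : Prop :=
  is_subring I /\ (forall x y, I y -> I (nmul x y) /\ I (nmul y x)).

Definition finite_type (T : eqType) : Prop := exists s : seq T, forall x : T, x \in s.

Definition hom_on (R F : nuRingType) (S : R -> Prop) (f : R -> F) : Prop :=
  forall x y, S x -> S y -> f (x + y) = f x + f y /\ f (nmul x y) = nmul (f x) (f y).

(* The ring S (a subring of R, regarded as a ring) is finitely separable: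
   subrings of S are exactly the subrings of R contained in S, and
   homomorphisms S -> F are maps R -> F that are homomorphisms on S. *)
Definition fin_sep_on (R : nuRingType) (S : R -> Prop) : Prop :=
  forall (r : R) (A : R -> Prop), S r -> is_subring A -> (forall a, A a -> S a) -> ~ A r ->
  exists (F : nuRingType) (f : R -> F),
    [/\ finite_type F, hom_on S f & ~ (exists a, A a /\ f a = f r)].

Definition fin_sep (R : nuRingType) : Prop := fin_sep_on (fun _ : R => True).

Definition fin_gen_ring (R : nuRingType) : Prop :=
  exists g : seq R, forall x : R, forall A : R -> Prop,
    is_subring A -> (forall y, y \in g -> A y) -> A x.

Definition quotient_add_fg (R : nuRingType) (I : R -> Prop) : Prop :=
  exists g : seq R, forall x : R, exists c : 'I_(size g) -> int,
    I (x - \sum_(i < size g) g`_i *~ c i).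

(* Main.v *)
Require Import Defs.
From HB Require Import structures.
From mathcomp Require Import all_boot all_algebra.
From Stdlib Require Import Classical ClassicalEpsilon FunctionalExtensionality PropExtensionality.
Set Implicit Arguments. Unset Strict Implicit. Unset Printing Implicit Defensive.
Import GRing.Theory Num.Theory.
Local Open Scope ring_scope.


Record ideal (K : nuRingType) := Ideal { ipred :> K -> Prop; ipredP : is_ideal ipred }.

Section Basic.
Variable K : nuRingType.
Implicit Types x y z : K.

Lemma nmul0r y : nmul (0 : K) y = 0.
Proof. by apply: (@addrI _ (nmul 0 y)); rewrite addr0 -nmulDl addr0. Qed.
Lemma nmulr0 y : nmul y (0 : K) = 0.
Proof. by apply: (@addrI _ (nmul y 0)); rewrite addr0 -nmulDr addr0. Qed.
Lemma nmulNr x y : nmul (- x) y = - nmul x y.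
Proof. by apply/eqP; rewrite -subr_eq0 opprK -nmulDl addNr nmul0r. Qed.
Lemma nmulrN x y : nmul y (- x) = - nmul y x.
Proof. by apply/eqP; rewrite -subr_eq0 opprK -nmulDr addNr nmulr0. Qed.
Lemma nmulBl x y z : nmul (x - y) z = nmul x z - nmul y z.
Proof. by rewrite nmulDl nmulNr. Qed.
Lemma nmulBr x y z : nmul z (x - y) = nmul z x - nmul z y.
Proof. by rewrite nmulDr nmulrN. Qed.
Lemma nmulnl x y n : nmul (x *+ n) y = nmul x y *+ n.
Proof. by elim: n => [|n IH]; rewrite ?mulr0n ?nmul0r // !mulrS nmulDl IH. Qed.
Lemma nmulnr x y n : nmul y (x *+ n) = nmul y x *+ n.
Proof. by elim: n => [|n IH]; rewrite ?mulr0n ?nmulr0 // !mulrS nmulDr IH. Qed.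
Lemma nmulzl x y (n : int) : nmul (x *~ n) y = nmul x y *~ n.
Proof. by case: n => n; rewrite ?NegzE ?mulrNz ?nmulNr -!pmulrn nmulnl. Qed.
Lemma nmulzr x y (n : int) : nmul y (x *~ n) = nmul y x *~ n.
Proof. by case: n => n; rewrite ?NegzE ?mulrNz ?nmulrN -!pmulrn nmulnr. Qed.
End Basic.

Section Canon.
Variables (K : nuRingType) (L : ideal K).
Implicit Types x y z : K.
Let LP := ipredP L.
Lemma L0 : L 0. Proof. by case: LP => [[]]. Qed.
Lemma LB x y : L x -> L y -> L (x - y). Proof. by case: LP => [[_ h _]] _; apply: h. Qed.
Lemma LN x : L x -> L (- x). Proof. by move=> h; rewrite -sub0r; apply: LB => //; apply: L0. Qed.
Lemma LD x y : L x -> L y -> L (x + y).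
Proof. by move=> hx hy; rewrite -[y]opprK; apply: LB => //; apply: LN. Qed.
Lemma Lml x y : L y -> L (nmul x y). Proof. by case: LP => _ h /(h x) []. Qed.
Lemma Lmr x y : L y -> L (nmul y x). Proof. by case: LP => _ h /(h x) []. Qed.

Definition canon x : K := epsilon (inhabits (0 : K)) (fun y => L (x - y)).
Lemma canonP x : L (x - canon x).
Proof. by apply: (epsilon_spec (inhabits 0) (fun y => L (x - y))); exists x; rewrite subrr; apply: L0. Qed.
Lemma canon_eq x y : L (x - y) -> canon x = canon y.
Proof.
move=> h; rewrite /canon; have -> : (fun z => L (x - z)) = (fun z => L (y - z)); last by []; apply: functional_extensionality => z.
apply: propositional_extensionality; split => hz.
  by have := LB hz h; rewrite opprB addrC addrA subrK.
by have := LD h hz; rewrite addrA subrK.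
Qed.
Lemma canon_eqP x y : canon x = canon y <-> L (x - y).
Proof.
split; last exact: canon_eq.
move=> e; have := LB (canonP x) (canonP y); rewrite e.
by rewrite opprB addrA subrK.
Qed.
Lemma canonK x : canon (canon x) = canon x.
Proof. by apply: canon_eq; rewrite -opprB; apply: LN; apply: canonP. Qed.
End Canon.

Definition Q (K : nuRingType) (L : ideal K) := {x : K | canon L x == x}.
HB.instance Definition _ (K : nuRingType) (L : ideal K) := Choice.copy (Q L) {x : K | canon L x == x}.

Section QOps.
Variables (K : nuRingType) (L : ideal K).
Definition qpi (x : K) : Q L := exist _ (canon L x) (introT eqP (canonK L x)).
Lemma qpi_eqP x y : qpi x = qpi y <-> L (x - y).
Proof.
rewrite -canon_eqP; split; first by move=> /(congr1 val).
by move=> e; apply/val_inj; rewrite /= e.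
Qed.
Lemma qpiK (a : Q L) : qpi (val a) = a.
Proof. by case: a => x e; apply/val_inj => /=; apply/eqP. Qed.
Lemma qpi_canon x : L (x - val (qpi x)). Proof. exact: canonP. Qed.
Definition qadd (a b : Q L) := qpi (val a + val b).
Definition qopp (a : Q L) := qpi (- val a).
Definition qmul (a b : Q L) := qpi (nmul (val a) (val b)).
Definition qzero := qpi 0.
Lemma qaddE x y : qadd (qpi x) (qpi y) = qpi (x + y).
Proof.
rewrite /qadd; apply qpi_eqP.
suff -> : val (qpi x) + val (qpi y) - (x + y) = -((x - val (qpi x)) + (y - val (qpi y))).
  by apply: LN; apply: LD; apply: qpi_canon.
by rewrite [in RHS]opprD !opprB [in LHS]opprD addrACA.
Qed.
Lemma qoppE x : qopp (qpi x) = qpi (- x).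
Proof.
rewrite /qopp; apply qpi_eqP.
suff -> : - val (qpi x) - - x = x - val (qpi x) by apply: qpi_canon.
by rewrite opprK addrC.
Qed.
Lemma qmulE x y : qmul (qpi x) (qpi y) = qpi (nmul x y).
Proof.
rewrite /qmul; apply qpi_eqP; set x' := val (qpi x); set y' := val (qpi y).
have hx : L (x - x') by apply: qpi_canon.
have hy : L (y - y') by apply: qpi_canon.
have := LN (LD (Lmr y' hx) (Lml x hy)).
by rewrite nmulBl nmulBr addrC addrA subrK opprB.
Qed.
Lemma qind (P : Q L -> Prop) : (forall x, P (qpi x)) -> forall a, P a.
Proof. by move=> h a; rewrite -(qpiK a); apply: h. Qed.
Lemma qaddA : associative qadd.
Proof. by elim/qind=> x; elim/qind=> y; elim/qind=> z; rewrite !qaddE addrA. Qed.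
Lemma qaddC : commutative qadd.
Proof. by elim/qind=> x; elim/qind=> y; rewrite !qaddE addrC. Qed.
Lemma qadd0 : left_id qzero qadd.
Proof. by elim/qind=> x; rewrite qaddE add0r. Qed.
Lemma qaddN : left_inverse qzero qopp qadd.
Proof. by elim/qind=> x; rewrite qoppE qaddE addNr. Qed.
End QOps.

HB.instance Definition _ (K : nuRingType) (L : ideal K) :=
  GRing.isZmodule.Build (Q L) (@qaddA K L) (@qaddC K L) (@qadd0 K L) (@qaddN K L).

Section QRing.
Variables (K : nuRingType) (L : ideal K).
Lemma qpiD' (x y : K) : qpi L (x + y) = qpi L x + qpi L y.
Proof. by rewrite -qaddE. Qed.
Lemma qmulA : forall x y z : Q L, qmul x (qmul y z) = qmul (qmul x y) z.
Proof. by elim/qind=> x; elim/qind=> y; elim/qind=> z; rewrite !qmulE nmulA. Qed.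
Lemma qmulDl : forall x y z : Q L, qmul (x + y) z = qmul x z + qmul y z.
Proof. by elim/qind=> x; elim/qind=> y; elim/qind=> z; rewrite -qpiD' !qmulE -qpiD' nmulDl. Qed.
Lemma qmulDr : forall x y z : Q L, qmul x (y + z) = qmul x y + qmul x z.
Proof. by elim/qind=> x; elim/qind=> y; elim/qind=> z; rewrite -qpiD' !qmulE -qpiD' nmulDr. Qed.
End QRing.

HB.instance Definition _ (K : nuRingType) (L : ideal K) :=
  isNURing.Build (Q L) (@qmulA K L) (@qmulDl K L) (@qmulDr K L).

Section QFacts.
Variables (K : nuRingType) (L : ideal K).
Lemma qpiD (x y : K) : qpi L (x + y) = qpi L x + qpi L y.
Proof. exact: qpiD'. Qed.
Lemma qpiM (x y : K) : qpi L (nmul x y) = nmul (qpi L x) (qpi L y).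
Proof. by rewrite -qmulE. Qed.
End QFacts.


Fixpoint inspan (G : zmodType) (g : seq G) (x : G) : Prop :=
  match g with [::] => x = 0 | g0 :: g' => exists t : int, inspan g' (x - g0 *~ t) end.

Section Gen.
Variable G : zmodType.
Implicit Types x y z : G.

Lemma subBB x a y b : (x - a) - (y - b) = (x - y) - (a - b).
Proof. rewrite !opprB addrACA [RHS]addrACA [_ - y]addrC. by []. Qed.

Definition addsub (H : G -> Prop) := H 0 /\ forall x y, H x -> H y -> H (x - y).


Section AS.
Variables (H : G -> Prop) (hH : addsub H).
Lemma asub0 : H 0. Proof. by case: hH. Qed.
Lemma asubB x y : H x -> H y -> H (x - y). Proof. by case: hH => _; apply. Qed.
Lemma asubN x : H x -> H (- x). Proof. by move=> h; rewrite -sub0r; apply: asubB => //; apply: asub0. Qed.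
Lemma asubD x y : H x -> H y -> H (x + y).
Proof. by move=> hx hy; rewrite -[y]opprK; apply: asubB => //; apply: asubN. Qed.
Lemma asubn x n : H x -> H (x *+ n).
Proof. by move=> hx; elim: n => [|n IH]; [rewrite mulr0n; apply: asub0 | rewrite mulrS; apply: asubD]. Qed.
Lemma asubz x (n : int) : H x -> H (x *~ n).
Proof. by move=> hx; case: n => n; rewrite ?NegzE ?mulrNz -?pmulrn; [apply: asubn | apply: asubN; apply: asubn]. Qed.
End AS.
End Gen.

Section Ab.
Variable G : zmodType.
Implicit Types x y z : G.
Implicit Types g : seq G.

Lemma inspan_addsub (g : seq G) : addsub (inspan g).
Proof.
elim: g => [|g0 g IH].
  split; first by []. move=> x y /= -> ->. by rewrite subr0.
simpl.
split => /=; first by exists 0; rewrite mulr0z subr0; apply: asub0.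
move=> x y [t1 h1] [t2 h2]; exists (t1 - t2).
have := asubB IH h1 h2.
by rewrite subBB mulrzBr.
Qed.

Lemma inspan_mem g y : y \in g -> inspan g y.
Proof.
elim: g => [|g0 g IH] //= /[!inE] /orP [/eqP -> | /IH h].
  by exists 1; rewrite subrr; apply: asub0; apply: inspan_addsub.
by exists 0; rewrite mulr0z subr0.
Qed.

Lemma inspan_ind (P : G -> Prop) g s : addsub P -> (forall y, y \in g -> P y) -> inspan g s -> P s.
Proof.
move=> hP; elim: g s => [|g0 g IH] s /= hg; first by move=> ->; apply: asub0.
case=> t /IH h; have {}h := h (fun y hy => hg y (mem_behead (s := g0 :: g) hy)).
rewrite -(subrK (g0 *~ t) s); apply: asubD => //; apply: asubz => //; apply: hg; exact: mem_head.
Qed.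

Lemma inspan_cat g g' a b : inspan g a -> inspan g' b -> inspan (g ++ g') (a + b).
Proof.
elim: g a => [|g0 g IH] a /=; first by move=> -> hb; rewrite add0r.
case=> t ha hb; exists t; by rewrite addrAC; apply: IH.
Qed.

Lemma inspan_sum g (c : 'I_(size g) -> int) : inspan g (\sum_(i < size g) g`_i *~ c i).
Proof.
elim: g c => [|g0 g IH] c /=; first by rewrite big_ord0.
exists (c ord0); rewrite big_ord_recl /= [X in X - _]addrC addrK; exact: IH.
Qed.

End Ab.


Section Sep.
Variable G : zmodType.
Implicit Types x y z : G.
Implicit Types g : seq G.

Lemma key_eq (g0 y s h2 : G) (t z0 : int) (n : nat) :
 g0 *~ (t - z0 * n%:Z) - ((y - g0 *~ z0) *+ n - (s - g0 *~ t)) = h2 - (h2 + y *+ n - s).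
Proof.
rewrite mulrzBr mulrzA -pmulrn mulrnBl.
set A := g0 *~ z0 *+ n. set B := g0 *~ t. set C := y *+ n.
rewrite [in RHS]opprB addrCA [in RHS]opprD addNKr.
rewrite (opprB (C - A) (s - B)) (addrA (B - A)) (addrC (B - A) (s - B)) (addrA (s - B)) subrK.
by rewrite (opprB C A) addrA subrK.
Qed.

Lemma eq1 (s h B w0 : G) : s + h = (s - B + w0) + (h + (B - w0)).
Proof.
rewrite addrACA (addrCA w0 B) subrr addr0.
by rewrite (addrAC (s - B)) subrK.
Qed.

Lemma eq2 (y g0 w1 : G) (z0 : int) (d n1 : nat) :
  y *+ (n1 * d) = (g0 *~ (d%:Z * z0) - w1) *+ n1 + ((y - g0 *~ z0) *+ d + w1) *+ n1.
Proof.
rewrite -mulrnDl mulnC mulrnA; congr (_ *+ _).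
rewrite mulrC mulrzA -pmulrn mulrnBl.
set P := g0 *~ z0 *+ d. set Y := y *+ d.
rewrite addrACA addNr addr0 (addrCA P Y) subrr addr0 //.
Qed.

Lemma sep_ab (H : G -> Prop) : addsub H -> forall g x,
  (exists s h, inspan g s /\ H h /\ x = s + h) -> ~ H x ->
  exists n : nat, (0 < n)%N /\ ~ (exists h y, H h /\ inspan g y /\ x = h + y *+ n).
Proof.
move=> hH; elim=> [|g0 g IH] x.
  by case=> s [h [/= -> [hh ->]]]; rewrite add0r.
case=> s [h [[t /= hs] [hh ->]]] hx.
pose D (u : int) := exists w, inspan g w /\ H (g0 *~ u - w).
have hD : addsub D.
  split; first by exists 0; rewrite mulr0z subr0; split; apply: asub0 => //; apply: inspan_addsub.
  move=> u v [w1 [hw1 hh1]] [w2 [hw2 hh2]]; exists (w1 - w2); split.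
    have := asubB (inspan_addsub g) hw1 hw2. done.
  by rewrite mulrzBr -subBB; have := asubB hH hh1 hh2.
have Dsc u q : D u -> D (u * q).
  case=> w [hw hhw]; exists (w *~ q); split; first by have := asubz (inspan_addsub g) q hw.
  by rewrite mulrzA -mulrzBl; have := asubz hH q hhw.
have key (n : nat) h2 y (z0 : int) : H h2 -> inspan g (y - g0 *~ z0) -> s + h = h2 + y *+ n -> D (t - z0 * n%:Z).
  move=> hh2 hz e; exists ((y - g0 *~ z0) *+ n - (s - g0 *~ t)); split.
    by have := asubB (inspan_addsub g) (asubn (inspan_addsub g) n hz) hs.
  have eh : h = h2 + y *+ n - s by rewrite -e [s + h]addrC addrK.
  suff -> : g0 *~ (t - z0 * n%:Z) - ((y - g0 *~ z0) *+ n - (s - g0 *~ t)) = h2 - h by have := asubB hH hh2 hh.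
  by rewrite eh (key_eq _ _ _ h2).
have Dzero : ~ (exists d : nat, (0 < d)%N /\ D d%:Z) -> forall u, D u -> u = 0.
  move=> nd [] k hk; first by case: k hk => // k hk; case: nd; exists k.+1.
  case: nd; exists k.+1; split => //. by have := asubN hD hk; rewrite NegzE opprK.
have [[d [d0 hd]] | nd] := classic (exists d : nat, (0 < d)%N /\ D d%:Z).
  have [[w0 [hw0 hh0]] | nDt] := classic (D t).
    have hsp : inspan g (s - g0 *~ t + w0) by have := asubD (inspan_addsub g) hs hw0.
    have hhp : H (h + (g0 *~ t - w0)) by have := asubD hH hh hh0.
    have [n1 [n10 hn1]] := IH (s + h) (ex_intro _ _ (ex_intro _ _ (conj hsp (conj hhp (eq1 s h (g0 *~ t) w0))))) hx.
    exists (n1 * d)%N; split; first by rewrite muln_gt0 n10.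
    case=> h2 [y [hh2 [[z0 hz] e]]]; apply: hn1.
    have [w1 [hw1 hh1]] := Dsc _ z0 hd.
    exists (h2 + (g0 *~ (d%:Z * z0) - w1) *+ n1), ((y - g0 *~ z0) *+ d + w1).
    split; first by have := asubD hH hh2 (asubn hH n1 hh1).
    split; first by have := asubD (inspan_addsub g) (asubn (inspan_addsub g) d hz) hw1.
    by rewrite e -(addrA h2) -eq2.
  exists d; split => //; case=> h2 [y [hh2 [[z0 hz] e]]]; apply: nDt.
  have k := key d h2 y z0 hh2 hz e.
  have := asubD hD k (Dsc _ z0 hd).
  by rewrite (mulrC (d%:Z)) subrK.
have [hDt | nDt] := classic (D t).
  have t0 := Dzero nd t hDt.
  have hs' : inspan g s by move: hs; rewrite t0 mulr0z subr0.
  have [n1 [n10 hn1]] := IH (s + h) (ex_intro _ _ (ex_intro _ _ (conj hs' (conj hh (erefl (s + h)))))) hx.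
  exists n1; split => //; case=> h2 [y [hh2 [[z0 hz] e]]]; apply: hn1.
  have k := Dzero nd _ (key n1 h2 y z0 hh2 hz e).
  have z00 : z0 = 0.
    move: k; rewrite t0 sub0r => /eqP; rewrite oppr_eq0 mulf_eq0 => /orP [/eqP // | ].
    by move=> /eqP [] n0; rewrite n0 in n10.
  by exists h2, y; split => //; split => //; move: hz; rewrite z00 mulr0z subr0.
exists (absz t).+1; split => //; case=> h2 [y [hh2 [[z0 hz] e]]]; apply: nDt.
have k := Dzero nd _ (key _ h2 y z0 hh2 hz e).
move/eqP: k; rewrite subr_eq0 => /eqP tE.
have [z00 | z0n] := eqVneq z0 0.
  by rewrite tE z00 mul0r; apply: asub0 hD.
have := abszM z0 ((absz t).+1)%:Z; rewrite -tE /= => h1.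
have : (0 < absz z0)%N by rewrite absz_gt0.
move=> hz0; exfalso; have := leq_pmull (absz t).+1 hz0; by rewrite -h1 ltnn.
Qed.
End Sep.


Lemma quot_sep (K : nuRingType) (L : K -> Prop) (HL : is_ideal L) (s : seq K) (r : K) (A : K -> Prop) :
  (forall x, exists z, z \in s /\ L (x - z)) -> ~ (exists a, A a /\ L (a - r)) ->
  exists (F : nuRingType) (f : K -> F),
    [/\ finite_type F, hom_on (fun _ => True) f & ~ (exists a, A a /\ f a = f r)].
Proof.
move=> hs hsep; pose LI := Ideal HL.
exists (Q LI), (qpi LI); split.
- exists [seq qpi LI z | z <- s] => q.
  have [z [zs hz]] := hs (val q).
  have -> : q = qpi LI z by rewrite -(qpiK q); apply/qpi_eqP.
  exact: map_f.
- by move=> x y _ _; rewrite qpiD qpiM.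
- by case=> a [ha /qpi_eqP e]; apply: hsep; exists a.
Qed.

Fixpoint boxreps (G : zmodType) (n : nat) (g : seq G) : seq G :=
  match g with [::] => [:: 0] | g0 :: g' => [seq g0 *+ c + z | c <- iota 0 n, z <- boxreps n g'] end.

Lemma boxreps_eq (G : zmodType) (g0 z' y' : G) (c : nat) (q : int) (n : nat) (s : G) :
  s - g0 *~ (q * n%:Z + c%:Z) = z' + y' *+ n ->
  s = g0 *+ c + z' + (y' + g0 *~ q) *+ n.
Proof.
move=> e; rewrite -(subrK (g0 *~ (q * n%:Z + c%:Z)) s) e.
rewrite mulrzDr mulrzA -!pmulrn mulrnDl.
set C := g0 *+ c; set Y := y' *+ n; set Qn := g0 *~ q *+ n.
rewrite (addrC C z') -(addrA z') -(addrA z'); congr (_ + _).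
by rewrite addrA addrC.
Qed.

Lemma boxrepsP (G : zmodType) (n : nat) (g : seq G) s : (0 < n)%N -> inspan g s ->
  exists z y, z \in boxreps n g /\ s = z + y *+ n.
Proof.
move=> n0; elim: g s => [|g0 g IH] s /=.
  by move=> ->; exists 0, 0; rewrite mem_head mul0rn addr0.
case=> t /IH [z' [y' [hz' e]]].
have hn : (n%:Z != 0) by move: n0; rewrite lt0n.
have tE := divz_eq t n%:Z.
have := modz_ge0 t hn; have := ltz_pmod t (d := n%:Z) (ltac:(by rewrite ltz_nat)).
case E : (t %% n%:Z)%Z => [c|c] // hc _.
exists (g0 *+ c + z'), (y' + g0 *~ (t %/ n%:Z)%Z); split.
  apply: allpairs_f => //; rewrite mem_iota add0n; exact: hc.
by apply: boxreps_eq; rewrite -E -tE.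
Qed.

Lemma subring_addsub (K : nuRingType) (A : K -> Prop) : is_subring A -> addsub A.
Proof. by case. Qed.
Lemma ideal_addsub (K : nuRingType) (A : K -> Prop) : is_ideal A -> addsub A.
Proof. by case=> [[]]. Qed.
Lemma ideal_subring (K : nuRingType) (A : K -> Prop) : is_ideal A -> is_subring A.
Proof. by case. Qed.

Lemma subDD (G : zmodType) (a1 m1 a2 m2 : G) : (a1 + m1) - (a2 + m2) = (a1 - a2) + (m1 - m2).
Proof. by rewrite opprD addrACA. Qed.

Lemma step (K : nuRingType) (A M : K -> Prop) (r : K) (gm : seq K) :
  is_subring A -> is_ideal M -> (forall x, exists s, inspan gm s /\ M (x - s)) ->
  ~ (exists a m, A a /\ M m /\ r = a + m) ->
  exists (F : nuRingType) (f : K -> F),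
    [/\ finite_type F, hom_on (fun _ => True) f & ~ (exists a, A a /\ f a = f r)].
Proof.
move=> hA hM hgen hr.
have aA := subring_addsub hA; have aM := ideal_addsub hM.
pose H x := exists a m, A a /\ M m /\ x = a + m.
have hH : addsub H.
  split; first by exists 0, 0; rewrite addr0; split; [apply: asub0 aA | split; [apply: asub0 aM|]].
  move=> x y [a1 [m1 [ha1 [hm1 ->]]]] [a2 [m2 [ha2 [hm2 ->]]]].
  exists (a1 - a2), (m1 - m2); split; first by have := asubB aA ha1 ha2.
  split; first by have := asubB aM hm1 hm2.
  exact: subDD.
have [s [hs hms]] := hgen r.
have hr1 : exists s h, inspan gm s /\ H h /\ r = s + h.
  exists s, (r - s); split => //; split; last by rewrite addrC subrK.
  by exists 0, (r - s); rewrite add0r; split; [apply: asub0 aA | split].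
have [n [n0 hn]] := sep_ab hH hr1 hr.
pose L x := exists m y, M m /\ x = m + y *+ n.
have hLi : forall k x, L x -> L (nmul k x) /\ L (nmul x k).
  move=> k x [m [y [hm ->]]]; split.
    exists (nmul k m), (nmul k y); split; last by rewrite nmulDr nmulnr.
    by case: hM => _ /(_ k m hm) [].
  exists (nmul m k), (nmul y k); split; last by rewrite nmulDl nmulnl.
  by case: hM => _ /(_ k m hm) [].
have HL : is_ideal L.
  split => //; split.
  - by exists 0, 0; rewrite mul0rn addr0; split => //; apply: asub0 aM.
  - move=> x y [m1 [y1 [hm1 ->]]] [m2 [y2 [hm2 ->]]].
    exists (m1 - m2), (y1 - y2); split; first by have := asubB aM hm1 hm2.
    by rewrite subDD mulrnBl.
  - by move=> x y _ /(hLi x) [].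
apply: (quot_sep HL (s := boxreps n gm)).
  move=> x; have [sx [hsx hmx]] := hgen x.
  have [z [y [hz es]]] := boxrepsP n0 hsx.
  exists z; split => //; exists (x - sx), y; split => //.
  by rewrite es opprD addrA subrK.
case=> a [ha [m [y [hm e]]]]; apply: hn.
have [sy [hsy hmy]] := hgen y.
exists (a + (- m - (y - sy) *+ n)), (- sy); split.
  exists a, (- m - (y - sy) *+ n); split => //; split => //.
  have := asubB aM (asubN aM hm) (asubn aM n hmy); done.
split; first by have := asubN (inspan_addsub gm) hsy.
have er : r = a - (m + y *+ n) by rewrite -e opprB addrC subrK.
rewrite er mulNrn -(addrA a); congr (a + _).
rewrite opprD -(addrA (- m)); congr (- m + _).
by rewrite mulrnBl opprB (addrC (sy *+ n)) addrK.
Qed.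


Fixpoint allseqs (T : eqType) (s : seq T) (n : nat) : seq (seq T) :=
  match n with 0 => [:: [::]] | n.+1 => [seq a :: l | a <- s, l <- allseqs s n] end.

Lemma allseqsP (T : eqType) (s l : seq T) : (forall x, x \in l -> x \in s) -> l \in allseqs s (size l).
Proof.
elim: l => [|a l IH] /= h; first by rewrite mem_head.
apply: (allpairs_f (fun a l => a :: l)); first by apply: h; rewrite mem_head.
by apply: IH => x hx; apply: h; rewrite in_cons hx orbT.
Qed.

Theorem proposition3 (K : nuRingType) (I : K -> Prop) :
  is_ideal I -> fin_gen_ring K -> quotient_add_fg I -> fin_sep_on I -> fin_sep K.
Proof.
move=> hI _ [g hg] hsep r A _ hA _ hr.
have aI := ideal_addsub hI; have aA := subring_addsub hA.
have gen : forall x, exists s, inspan g s /\ I (x - s).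
  move=> x; have [c hc] := hg x; exists (\sum_(i < size g) g`_i *~ c i); split => //.
  exact: inspan_sum.
have Il k x : I x -> I (nmul k x) by move=> hx; case: hI => _ /(_ k x hx) [].
have Ir k x : I x -> I (nmul x k) by move=> hx; case: hI => _ /(_ k x hx) [].
have [[a0 [i0 [ha0 [hi0 er]]]] | nr] := classic (exists a i, A a /\ I i /\ r = a + i); last first.
  exact: (step hA hI gen nr).
pose A' x := A x /\ I x.
have hA' : is_subring A'.
  case: hA => hA0 hAB hAM; case: (ideal_subring hI) => hI0 hIB hIM.
  split; first by split.
  - by move=> x y [? ?] [? ?]; split; [apply: hAB | apply: hIB].
  - by move=> x y [? ?] [? ?]; split; [apply: hAM | apply: hIM].
have nA'i : ~ A' i0.
  case=> hai _; apply: hr; rewrite er; by have := asubD aA ha0 hai.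
have [F [f [[sF hsF] hf nsep]]] := hsep i0 A' hi0 hA' (fun a h => proj2 h) nA'i.
have fD x y : I x -> I y -> f (x + y) = f x + f y by move=> hx hy; case: (hf x y hx hy).
have fM x y : I x -> I y -> f (nmul x y) = nmul (f x) (f y) by move=> hx hy; case: (hf x y hx hy).
have fB x y : I x -> I y -> f (x - y) = f x - f y.
  move=> hx hy; have hxy : I (x - y) by have := asubB aI hx hy.
  by have := fD _ _ hxy hy; rewrite subrK => ->; rewrite addrK.
pose J x := I x /\ f x = 0.
have aJ : addsub J.
  split; first by split; [apply: asub0 aI | have := fB 0 0 (asub0 aI) (asub0 aI); rewrite !subrr].
  move=> x y [hx fx] [hy fy]; split; first by have := asubB aI hx hy.
  by rewrite fB // fx fy subrr.
have Jl z y : I z -> J y -> J (nmul z y).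
  by move=> hz [hy fy]; split; [apply: Il | rewrite fM // fy nmulr0].
have Jr z y : I z -> J y -> J (nmul y z).
  by move=> hz [hy fy]; split; [apply: Ir | rewrite fM // fy nmul0r].
pose Mc x := [/\ I x, J x, (forall k, J (nmul k x) /\ J (nmul x k))
                  & (forall k k', J (nmul (nmul k x) k'))].
have hMc : is_ideal Mc.
  have Mcl k x : Mc x -> Mc (nmul k x).
    case=> hx jx h1 h2; split.
    - exact: Il.
    - by case: (h1 k).
    - move=> k''; split; first by rewrite nmulA; case: (h1 (nmul k'' k)).
      exact: h2.
    - by move=> k'' k'''; rewrite nmulA; apply: h2.
  have Mcr k x : Mc x -> Mc (nmul x k).
    case=> hx jx h1 h2; split.
    - exact: Ir.
    - by case: (h1 k).
    - move=> k''; split; first by rewrite nmulA; apply: h2.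
      by rewrite -nmulA; case: (h1 (nmul k k'')).
    - by move=> k'' k'''; rewrite nmulA -(nmulA _ _ k'''); apply: h2.
  split; last by move=> x y hy; split; [apply: Mcl | apply: Mcr].
  split.
  - split; [apply: asub0 aI | apply: asub0 aJ | move=> k; rewrite nmulr0 nmul0r; split; apply: asub0 aJ |].
    by move=> k k'; rewrite nmulr0 nmul0r; apply: asub0 aJ.
  - move=> x y [hx jx hx1 hx2] [hy jy hy1 hy2]; split.
    + by have := asubB aI hx hy.
    + by have := asubB aJ jx jy.
    + move=> k; rewrite nmulBr nmulBl; case: (hx1 k) => a1 a2; case: (hy1 k) => b1 b2.
      by split; [have := asubB aJ a1 b1 | have := asubB aJ a2 b2].
    + by move=> k k'; rewrite nmulBr nmulBl; have := asubB aJ (hx2 k k') (hy2 k k').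
  - by move=> x y _ hy; apply: Mcl.
have sepM : ~ (exists a m, A a /\ Mc m /\ r = a + m).
  case=> a [m [ha [[hm jm _ _] e]]]; apply: nsep.
  have ea : a - a0 = i0 - m.
    apply/eqP; rewrite subr_eq (addrC (i0 - m)) addrA -er e addrK.
    by [].
  exists (a - a0); split; first split.
  - by have := asubB aA ha ha0.
  - by rewrite ea; have := asubB aI hi0 hm.
  - by rewrite ea fB // (proj2 jm) subr0.
pose cls x := ((f x, [seq f (nmul gi x) | gi <- g]),
               ([seq f (nmul x gi) | gi <- g], [seq [seq f (nmul (nmul gi x) gj) | gj <- g] | gi <- g])).
pose S1 := allseqs sF (size g).
pose S2 := allseqs S1 (size g).
pose V := [seq (p, q) | p <- [seq (a, b) | a <- sF, b <- S1], q <- [seq (c, d) | c <- S1, d <- S2]].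
have inS1 (h : K -> K) : [seq f (h gi) | gi <- g] \in S1.
  by rewrite /S1 -(size_map (fun gi => f (h gi)) g); apply: allseqsP.
have hV x : cls x \in V.
  apply: allpairs_f; apply: allpairs_f.
  - exact: hsF.
  - exact: (inS1 (fun gi => nmul gi x)).
  - exact: (inS1 (fun gi => nmul x gi)).
  - rewrite /S2 -(size_map (fun gi => [seq f (nmul (nmul gi x) gj) | gj <- g]) g).
    apply: allseqsP => l /mapP [gi _ ->].
    exact: (inS1 (fun gj => nmul (nmul gi x) gj)).
pose rep v := epsilon (inhabits (0 : K)) (fun y => I y /\ cls y = v).
have repP x : I x -> I (rep (cls x)) /\ cls (rep (cls x)) = cls x.
  by move=> hx; apply: (epsilon_spec (inhabits 0) (fun y => I y /\ cls y = cls x)); exists x.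
have key x y : I x -> I y -> cls x = cls y -> Mc (x - y).
  move=> hx hy [e1 /eq_in_map e2 /eq_in_map e3 /eq_in_map e4].
  have hd : I (x - y) by have := asubB aI hx hy.
  have fE u v : I u -> I v -> f u = f v -> J (u - v).
    move=> hu hv fuv; split; first by have := asubB aI hu hv.
    by rewrite fB // fuv subrr.
  have J1 : J (x - y) := fE x y hx hy e1.
  have Jgg gi gj : gi \in g -> gj \in g -> J (nmul (nmul gi (x - y)) gj).
    move=> hi hj; rewrite nmulBr nmulBl; apply: fE; try by apply: Ir; apply: Il.
    by have /eq_in_map := e4 gi hi; apply.
  set d := x - y.
  have aP : addsub (fun s => J (nmul s d)).
    split; first by rewrite nmul0r; apply: asub0 aJ.
    by move=> u v hu hv; rewrite nmulBl; have := asubB aJ hu hv.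
  have aP' : addsub (fun s => J (nmul d s)).
    split; first by rewrite nmulr0; apply: asub0 aJ.
    by move=> u v hu hv; rewrite nmulBr; have := asubB aJ hu hv.
  have onel k : J (nmul k d).
    have [s [hs hks]] := gen k.
    have -> : nmul k d = nmul s d + nmul (k - s) d by rewrite -nmulDl addrC subrK.
    have h1 : J (nmul s d).
      apply: (inspan_ind aP _ hs) => gi hi.
      by rewrite /d nmulBr; apply: fE; try (apply: Il; assumption); exact: e2.
    by have := asubD aJ h1 (Jl _ _ hks J1).
  have oner k : J (nmul d k).
    have [s [hs hks]] := gen k.
    have -> : nmul d k = nmul d s + nmul d (k - s) by rewrite -nmulDr addrC subrK.
    have h1 : J (nmul d s).
      apply: (inspan_ind aP' _ hs) => gi hi.
      by rewrite /d nmulBl; apply: fE; try (apply: Ir; assumption); exact: e3.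
    by have := asubD aJ h1 (Jr _ _ hks J1).
  have aP2 : addsub (fun s => forall s', inspan g s' -> J (nmul (nmul s d) s')).
    split; first by move=> s' _; rewrite !nmul0r; apply: asub0 aJ.
    by move=> u v hu hv s' hs'; rewrite !nmulBl; have := asubB aJ (hu s' hs') (hv s' hs').
  have two s : inspan g s -> forall s', inspan g s' -> J (nmul (nmul s d) s').
    move=> hs; apply: (inspan_ind aP2 _ hs) => gi hi s' hs'.
    have aP3 : addsub (fun s' => J (nmul (nmul gi d) s')).
      split; first by rewrite nmulr0; apply: asub0 aJ.
      by move=> u v hu hv; rewrite nmulBr; have := asubB aJ hu hv.
    by apply: (inspan_ind aP3 _ hs') => gj hj; apply: Jgg.
  split => //.
  move=> k k'.
  have [s [hs hks]] := gen k.
  have [s' [hs' hks']] := gen k'.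
  have -> : nmul k d = nmul s d + nmul (k - s) d by rewrite -nmulDl addrC subrK.
  rewrite nmulDl.
  have -> : nmul (nmul s d) k' = nmul (nmul s d) s' + nmul (nmul s d) (k' - s')
    by rewrite -nmulDr addrC subrK.
  have j1 : J (nmul (nmul s d) s') by apply: two.
  have j2 : J (nmul (nmul s d) (k' - s')) by apply: Jr _ _ hks' (onel s).
  have j3 : J (nmul (nmul (k - s) d) k') by rewrite -nmulA; apply: Jl _ _ hks (oner k').
  by have := asubD aJ (asubD aJ j1 j2) j3.
apply: (step (gm := g ++ [seq rep v | v <- V]) hA hMc) sepM => x.
have [s0 [hs0 hi]] := gen x.
have [hy ey] := repP _ hi.
exists (s0 + rep (cls (x - s0))); split.
  by apply: inspan_cat => //; apply: inspan_mem; apply: map_f.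
by rewrite opprD addrA; apply: key => //; rewrite ey.
Qed.
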